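(* Let $\mathbb{A}=(A,\backslash,/)$ be a residuation algebra that has no zero-divisors and satisfies $a\backslash(b\vee c)\leq(a\backslash b)\vee(a\backslash c)$ for all $a,b,c\in A$. Then the dual structure $\mathbb{A}^\delta_+$ is total, i.e. $y\cdot z\in J^\infty(A^\delta)$ for all $y,z\in J^\infty(A^\delta)$.
   Context: A residuation algebra is a structure $(A,\backslash,/)$ where $A$ is a bounded distributive lattice and $\backslash,/$ are binary operations on $A$ such that $\backslash$ preserves finite (including empty) meets in its second coordinate, $/$ preserves finite (including empty) meets in its first coordinate, and for all $a,b,c\in A$: $b\leq a\backslash c$ iff $a\leq c/b$. The canonical extension $A^\delta$ of $A$ is the complete lattice containing $A$ as a sublattice that is dense (every element is a join of meets and a meet of joins of elements of $A$) and compact (if $\bigwedge S\leq\bigvee T$ for $S,T\subseteq A$ then this holds for some finite subsets). Let $K(A^\delta)$ (resp. $O(A^\delta)$) be the set of meets (resp. joins) of subsets of $A$. The $\pi$-extension of $\backslash$ is: for $k\in K(A^\delta)$, $o\in O(A^\delta)$, $k\backslash^\pi o=\bigvee\{a\backslash b\mid a,b\in A,\ k\leq a,\ b\leq o\}$, and for arbitrary $u,v$, $u\backslash^\pi v=\bigwedge\{k\backslash^\pi o\mid k\in K(A^\delta), o\in O(A^\delta), k\leq u, v\leq o\}$; $/^\pi$ is defined symmetrically. There is a binary operation $\cdot$ on $A^\delta$ such that for all $u,v,w\in A^\delta$: $v\leq u\backslash^\pi w$ iff $u\cdot v\leq w$ iff $u\leq w/^\pi v$. $J^\infty(A^\delta)$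 is the set of completely join-irreducible elements of $A^\delta$. The dual structure $\mathbb{A}^\delta_+$ is $(J^\infty(A^\delta),\geq,R)$ with $R(x,y,z)$ iff $x\leq y\cdot z$; it is total if $y\cdot z\in J^\infty(A^\delta)$ for all $y,z\in J^\infty(A^\delta)$. $\mathbb{A}$ has no zero-divisors if $x\cdot y\neq\bot$ for all $x,y\in J^\infty(A^\delta)$. *)

(* Defs.v *)
From HB Require Import structures.
From mathcomp Require Import all_boot all_order.
Set Implicit Arguments. Unset Strict Implicit. Unset Printing Implicit Defensive.
Import Order.TTheory.
Local Open Scope order_scope.

Record complete_lattice := CompleteLattice {
  cl_car :> Type;
  cl_le : cl_car -> cl_car -> Prop;
  cl_sup : (cl_car -> Prop) -> cl_car;
  cl_refl : forall x, cl_le x x;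
  cl_antisym : forall x y, cl_le x y -> cl_le y x -> x = y;
  cl_trans : forall x y z, cl_le x y -> cl_le y z -> cl_le x z;
  cl_sup_ub : forall (S : cl_car -> Prop) x, S x -> cl_le x (cl_sup S);
  cl_sup_least : forall (S : cl_car -> Prop) y,
      (forall x, S x -> cl_le x y) -> cl_le (cl_sup S) y
}.

Section CL.
Variable C : complete_lattice.
Definition cl_inf (S : C -> Prop) : C :=
  cl_sup (fun y => forall x, S x -> cl_le y x).
Definition cl_bot : C := cl_sup (fun _ => False).
Definition cl_top : C := cl_inf (fun _ => False).
Definition cl_join (x y : C) : C := cl_sup (fun z => z = x \/ z = y).
Definition cl_meet (x y : C) : C := cl_inf (fun z => z = x \/ z = y).

(* completely join-irreducible: whenever j is the join of S, j belongs to S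
   (in particular j <> bottom, the join of the empty set) *)
Definition completely_join_irreducible (j : C) : Prop :=
  forall S : C -> Prop, j = cl_sup S -> S j.
End CL.

Definition residuation_algebra {d} (A : tbDistrLatticeType d)
    (ldiv rdiv : A -> A -> A) : Prop :=
  (forall a b c, ldiv a (b `&` c) = ldiv a b `&` ldiv a c) /\
  (forall a, ldiv a \top = \top) /\
  (forall a b c, rdiv (b `&` c) a = rdiv b a `&` rdiv c a) /\
  (forall a, rdiv \top a = \top) /\
  (forall a b c, b <= ldiv a c <-> a <= rdiv c b).

Section CanExt.
Context {d} (A : tbDistrLatticeType d) (C : complete_lattice) (e : A -> C).

Definition image (S : A -> Prop) : C -> Prop := fun x => exists2 a, S a & x = e a.

Definition bounded_lattice_embedding : Prop :=
  (forall a b, cl_le (e a) (e b) <-> a <= b) /\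
  (forall a b, e (a `&` b) = cl_meet (e a) (e b)) /\
  (forall a b, e (a `|` b) = cl_join (e a) (e b)) /\
  e \bot = cl_bot C /\ e \top = cl_top C.

Definition closed_elt (k : C) : Prop := exists S : A -> Prop, k = cl_inf (image S).
Definition open_elt (o : C) : Prop := exists S : A -> Prop, o = cl_sup (image S).

Definition dense : Prop :=
  forall u : C,
    u = cl_sup (fun k => closed_elt k /\ cl_le k u) /\
    u = cl_inf (fun o => open_elt o /\ cl_le u o).

Definition compact : Prop :=
  forall S T : A -> Prop, cl_le (cl_inf (image S)) (cl_sup (image T)) ->
    exists (s t : seq A), (forall a, a \in s -> S a) /\ (forall b, b \in t -> T b) /\
      \meet_(a <- s) a <= \join_(b <- t) b.

Definition canonical_extension : Prop :=
  bounded_lattice_embedding /\ dense /\ compact.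

Definition ldiv_KO (ldiv : A -> A -> A) (k o : C) : C :=
  cl_sup (fun x => exists a b, cl_le k (e a) /\ cl_le (e b) o /\ x = e (ldiv a b)).
Definition ldiv_pi (ldiv : A -> A -> A) (u v : C) : C :=
  cl_inf (fun x => exists k o, closed_elt k /\ open_elt o /\ cl_le k u /\ cl_le v o /\
                               x = ldiv_KO ldiv k o).
Definition rdiv_OK (rdiv : A -> A -> A) (o k : C) : C :=
  cl_sup (fun x => exists b a, cl_le (e b) o /\ cl_le k (e a) /\ x = e (rdiv b a)).
Definition rdiv_pi (rdiv : A -> A -> A) (u v : C) : C :=
  cl_inf (fun x => exists o k, open_elt o /\ closed_elt k /\ cl_le u o /\ cl_le k v /\
                               x = rdiv_OK rdiv o k).
End CanExt.

(* Main.v *)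
Require Import Defs.
From mathcomp Require Import all_boot all_order.
From Stdlib Require Import Classical.
Set Implicit Arguments. Unset Strict Implicit.
Import Order.Theory.
Local Open Scope order_scope.

Lemma inf_lb (C : complete_lattice) (S : C -> Prop) x : S x -> cl_le (cl_inf S) x.
Proof. move=> Sx; apply: cl_sup_least => y Hy; exact: Hy. Qed.

Lemma inf_glb (C : complete_lattice) (S : C -> Prop) y :
  (forall x, S x -> cl_le y x) -> cl_le y (cl_inf S).
Proof. move=> H; exact: (@cl_sup_ub C _ y H). Qed.

Lemma bot_le (C : complete_lattice) (x : C) : cl_le (cl_bot C) x.
Proof. by apply: cl_sup_least. Qed.

Lemma le_top (C : complete_lattice) (x : C) : cl_le x (cl_top C).
Proof. by apply: inf_glb. Qed.

Lemma cji_nbot (C : complete_lattice) (j : C) :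
  completely_join_irreducible j -> cl_le j (cl_bot C) -> False.
Proof.
move=> Hj Hb; apply: (Hj (fun _ => False)).
exact: (cl_antisym Hb (bot_le _)).
Qed.

Lemma meet_l (C : complete_lattice) (x y : C) : cl_le (cl_meet x y) x.
Proof. by apply: inf_lb; left. Qed.
Lemma meet_r (C : complete_lattice) (x y : C) : cl_le (cl_meet x y) y.
Proof. by apply: inf_lb; right. Qed.
Lemma meet_glb (C : complete_lattice) (x y z : C) :
  cl_le z x -> cl_le z y -> cl_le z (cl_meet x y).
Proof. by move=> h1 h2; apply: inf_glb => w [->|->]. Qed.
Lemma join_l (C : complete_lattice) (x y : C) : cl_le x (cl_join x y).
Proof. by apply: cl_sup_ub; left. Qed.
Lemma join_r (C : complete_lattice) (x y : C) : cl_le y (cl_join x y).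
Proof. by apply: cl_sup_ub; right. Qed.
Lemma join_lub (C : complete_lattice) (x y z : C) :
  cl_le x z -> cl_le y z -> cl_le (cl_join x y) z.
Proof. by move=> h1 h2; apply: cl_sup_least => w [->|->]. Qed.

Section Emb.
Lemma e_mono {d} (A : tbDistrLatticeType d) (C : complete_lattice) (e : A -> C) :
  bounded_lattice_embedding e -> forall a b, a <= b -> cl_le (e a) (e b).
Proof. by move=> [H _] a b; rewrite -H. Qed.

Lemma e_meet {d} (A : tbDistrLatticeType d) (C : complete_lattice) (e : A -> C) :
  bounded_lattice_embedding e -> forall j a b, cl_le j (e a) -> cl_le j (e b) ->
  cl_le j (e (a `&` b)).
Proof. by move=> [_ [H _]] j a b h1 h2; rewrite H; apply: meet_glb. Qed.

Lemma e_join {d} (A : tbDistrLatticeType d) (C : complete_lattice) (e : A -> C) :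
  bounded_lattice_embedding e -> forall w a b, cl_le (e a) w -> cl_le (e b) w ->
  cl_le (e (a `|` b)) w.
Proof. by move=> [_ [_ [H _]]] j a b h1 h2; rewrite H; apply: join_lub. Qed.

Lemma e_bot {d} (A : tbDistrLatticeType d) (C : complete_lattice) (e : A -> C) :
  bounded_lattice_embedding e -> forall w, cl_le (e \bot) w.
Proof. by move=> [_ [_ [_ [H _]]]] w; rewrite H; apply: bot_le. Qed.

Lemma e_top {d} (A : tbDistrLatticeType d) (C : complete_lattice) (e : A -> C) :
  bounded_lattice_embedding e -> forall w, cl_le w (e \top).
Proof. by move=> [_ [_ [_ [_ H]]]] w; rewrite H; apply: le_top. Qed.

Lemma e_meet_list {d} (A : tbDistrLatticeType d) (C : complete_lattice) (e : A -> C) :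
  bounded_lattice_embedding e -> forall j (s : seq A),
  (forall a, a \in s -> cl_le j (e a)) -> cl_le j (e (\meet_(a <- s) a)).
Proof.
move=> emb j; elim=> [|a s IH] H; first by rewrite big_nil; apply: e_top.
rewrite big_cons; apply: e_meet => //; first by apply: H; rewrite inE eqxx.
by apply: IH => b hb; apply: H; rewrite inE hb orbT.
Qed.

Lemma e_join_list {d} (A : tbDistrLatticeType d) (C : complete_lattice) (e : A -> C) :
  bounded_lattice_embedding e -> forall (T : A -> Prop) (s : seq A),
  (forall a, a \in s -> T a) -> cl_le (e (\join_(a <- s) a)) (cl_sup (Defs.image e T)).
Proof.
move=> emb T; elim=> [|a s IH] H; first by rewrite big_nil; apply: e_bot.
rewrite big_cons; apply: e_join => //.
  by apply: cl_sup_ub; exists a => //; apply: H; rewrite inE eqxx.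
by apply: IH => b hb; apply: H; rewrite inE hb orbT.
Qed.

Lemma cji_closed {d} (A : tbDistrLatticeType d) (C : complete_lattice) (e : A -> C) :
  dense e -> forall j, completely_join_irreducible j -> closed_elt e j.
Proof. by move=> D j Hj; have [H _] := D j; have [] := Hj _ H. Qed.

Lemma le_via_opens {d} (A : tbDistrLatticeType d) (C : complete_lattice) (e : A -> C) :
  dense e -> forall x s, (forall o, open_elt e o -> cl_le s o -> cl_le x o) -> cl_le x s.
Proof.
move=> D x s H; have [_ ->] := D s; apply: inf_glb => o [? ?]; exact: H.
Qed.
End Emb.

Lemma u_part {d} (A : tbDistrLatticeType d) (C : complete_lattice) (e : A -> C) :
  canonical_extension e -> forall (U T : A -> Prop) c,
  cl_le (cl_meet (cl_inf (Defs.image e U)) (e c)) (cl_sup (Defs.image e T)) ->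
  exists u (tl : seq A), cl_le (cl_inf (Defs.image e U)) (e u) /\
    (forall t, t \in tl -> T t) /\ u `&` c <= \join_(t <- tl) t.
Proof.
move=> [emb [D K]] U T c H.
set j := cl_inf (Defs.image e U).
have Hle : cl_le (cl_inf (Defs.image e (fun a => U a \/ a = c))) (cl_meet j (e c)).
  apply: meet_glb.
    apply: inf_glb => x [a Ua ->]; apply: inf_lb; exists a => //; by left.
  apply: inf_lb; exists c => //; by right.
have [s [tl [Hs [Ht Hst]]]] := K (fun a => U a \/ a = c) T (cl_trans Hle H).
suff [u [hu1 hu2]] : exists u, cl_le j (e u) /\ u `&` c <= \meet_(a <- s) a.
  exists u, tl; split=> //; split=> //; exact: le_trans hu2 Hst.
elim: s Hs {Hst} => [|a s IH] Hs.
  exists \top; split; first exact: e_top.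
  by rewrite big_nil lex1.
have [u [hu1 hu2]] : exists u, cl_le j (e u) /\ u `&` c <= \meet_(a <- s) a.
  by apply: IH => b hb; apply: Hs; rewrite inE hb orbT.
have : U a \/ a = c by apply: Hs; rewrite inE eqxx.
case=> [Ua|->].
  exists (a `&` u); split.
    apply: e_meet => //; apply: inf_lb; by exists a.
  by rewrite big_cons -meetA leI2.
exists u; split => //.
by rewrite big_cons lexI leIr hu2.
Qed.

Lemma jp2 {d} (A : tbDistrLatticeType d) (C : complete_lattice) (e : A -> C) :
  canonical_extension e -> forall j c1 c2, completely_join_irreducible j ->
  cl_le j (e (c1 `|` c2)) -> cl_le j (e c1) \/ cl_le j (e c2).
Proof.
move=> CE j c1 c2 Hj Hc.
have [emb [D K]] := CE.
have [U HU] := cji_closed D Hj.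
set m := cl_join (cl_meet j (e c1)) (cl_meet j (e c2)).
have jm : j = m.
  apply: cl_antisym; last by apply: join_lub; apply: meet_l.
  apply: (le_via_opens D) => o [T ->] mo.
  have h1 : cl_le (cl_meet (cl_inf (Defs.image e U)) (e c1)) (cl_sup (Defs.image e T)).
    by rewrite -HU; apply: cl_trans mo; apply: join_l.
  have h2 : cl_le (cl_meet (cl_inf (Defs.image e U)) (e c2)) (cl_sup (Defs.image e T)).
    by rewrite -HU; apply: cl_trans mo; apply: join_r.
  have [u1 [t1 [hu1 [ht1 hst1]]]] := u_part CE h1.
  have [u2 [t2 [hu2 [ht2 hst2]]]] := u_part CE h2.
  rewrite -HU in hu1 hu2.
  have hj : cl_le j (e (u1 `&` u2 `&` (c1 `|` c2))).
    by apply: e_meet => //; apply: e_meet.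
  apply: cl_trans hj _.
  apply: cl_trans (e_join_list emb (s := t1 ++ t2) _).
    apply: (e_mono emb); rewrite big_cat /= meetUr; apply: leU2.
      by apply: le_trans hst1; apply: leI2 => //; apply: leIl.
    by apply: le_trans hst2; apply: leI2 => //; apply: leIr.
  by move=> a; rewrite mem_cat => /orP [] ?; [apply: ht1|apply: ht2].
have := Hj (fun z => z = cl_meet j (e c1) \/ z = cl_meet j (e c2)) jm.
case=> h; [left|right]; rewrite h; apply: meet_r.
Qed.

Lemma jp_list {d} (A : tbDistrLatticeType d) (C : complete_lattice) (e : A -> C) :
  canonical_extension e -> forall j (l : seq A), completely_join_irreducible j ->
  cl_le j (e (\join_(c <- l) c)) -> exists2 c, c \in l & cl_le j (e c).
Proof.
move=> CE j l Hj; elim: l => [|c l IH].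
  rewrite big_nil => H; exfalso; apply: (cji_nbot Hj).
  by apply: cl_trans H _; case: CE => [[_ [_ [_ [-> _]]]] _]; apply: cl_refl.
rewrite big_cons => /(jp2 CE Hj) [H|/IH [c' h1 h2]].
  by exists c => //; rewrite inE eqxx.
by exists c' => //; rewrite inE h1 orbT.
Qed.

Lemma ldiv_mono2 {d} (A : tbDistrLatticeType d) (ldiv rdiv : A -> A -> A) :
  residuation_algebra ldiv rdiv -> forall a b c, b <= c -> ldiv a b <= ldiv a c.
Proof.
move=> [H1 _] a b c /meet_idPl hbc.
by have := H1 a b c; rewrite hbc => ->; apply: leIr.
Qed.

Lemma ldiv_anti1 {d} (A : tbDistrLatticeType d) (ldiv rdiv : A -> A -> A) :
  residuation_algebra ldiv rdiv -> forall a a' c, a' <= a -> ldiv a c <= ldiv a' c.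
Proof.
move=> [_ [_ [_ [_ H5]]]] a a' c ha.
apply/H5; apply: le_trans ha _; apply/H5; exact: lexx.
Qed.

Lemma L1 {d} (A : tbDistrLatticeType d) (C : complete_lattice) (e : A -> C) ldiv y v a b :
  cl_le y (e a) -> cl_le (e b) v -> cl_le (e (ldiv a b)) (ldiv_pi e ldiv y v).
Proof.
move=> ha hb; apply: inf_glb => x [k [o [_ [_ [ky [vo ->]]]]]].
apply: cl_sup_ub; exists a, b; split; first exact: cl_trans ky ha.
by split; first exact: cl_trans hb vo.
Qed.

Lemma ldiv_split {d} (A : tbDistrLatticeType d) (ldiv rdiv : A -> A -> A) :
  residuation_algebra ldiv rdiv ->
  (forall a b c : A, ldiv a (b `|` c) <= ldiv a b `|` ldiv a c) ->
  forall a (l : seq A),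
  ldiv a (\join_(t <- l) t) <= \join_(c <- ldiv a \bot :: map (ldiv a) l) c.
Proof.
move=> RA Hd a; elim=> [|t l IH].
  by rewrite /= !big_cons !big_nil joinx0 lexx.
rewrite big_cons /= !big_cons; apply: le_trans (Hd _ _ _) _.
move: IH; rewrite big_cons => IH.
rewrite joinCA; apply: leU2 => //.
Qed.

Theorem corollary2p6 {d} (A : tbDistrLatticeType d) (ldiv rdiv : A -> A -> A)
  (C : complete_lattice) (e : A -> C) (mult : C -> C -> C) :
  residuation_algebra ldiv rdiv ->
  canonical_extension e ->
  (* mult is the operation on A^delta residuated by the pi-extensions *)
  (forall u v w : C,
     (cl_le v (ldiv_pi e ldiv u w) <-> cl_le (mult u v) w) /\
     (cl_le (mult u v) w <-> cl_le u (rdiv_pi e rdiv w v))) ->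
  (* no zero-divisors *)
  (forall x y : C, completely_join_irreducible x -> completely_join_irreducible y ->
     mult x y <> cl_bot C) ->
  (forall a b c : A, ldiv a (b `|` c) <= ldiv a b `|` ldiv a c) ->
  forall y z : C, completely_join_irreducible y -> completely_join_irreducible z ->
    completely_join_irreducible (mult y z).
Proof.
move=> RA CE Hadj Hnzd Hdist y z Hy Hz S Hx.
have [emb [D K]] := CE.
set x := mult y z in Hx *.
suff [s Ss xs] : exists2 s, S s & cl_le x s.
  have -> : x = s by apply: cl_antisym => //; rewrite Hx; apply: cl_sup_ub.
  exact: Ss.
apply: NNPP => H.
have Hs : forall s, S s -> exists o, open_elt e o /\ cl_le s o /\ ~ cl_le x o.
  move=> s Ss; apply: NNPP => H2; apply: H; exists s => //.
  apply: (le_via_opens D) => o Oo so; apply: NNPP => H3; apply: H2; by exists o.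
pose T a := exists o, open_elt e o /\ ~ cl_le x o /\ cl_le (e a) o.
set W := cl_sup (Defs.image e T).
have xW : cl_le x W.
  rewrite Hx; apply: cl_sup_least => s Ss.
  have [o [[To Ho] [so nxo]]] := Hs s Ss.
  apply: cl_trans so _; rewrite Ho; apply: cl_sup_least => w [t Tt ->].
  apply: cl_sup_ub; exists t => //; exists o; split; first by exists To.
  by split => //; rewrite Ho; apply: cl_sup_ub; exists t.
have zW : cl_le z (ldiv_pi e ldiv y W) by apply/(proj1 (Hadj y z W)).
have zKO : cl_le z (ldiv_KO e ldiv y W).
  apply: cl_trans zW _; apply: inf_lb; exists y, W; split; first exact: cji_closed.
  split; first by exists T.
  by split; [apply: cl_refl|split; [apply: cl_refl|]].
have [Uz HUz] := cji_closed D Hz.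
pose P c := exists a b, cl_le y (e a) /\ cl_le (e b) W /\ c = ldiv a b.
have [s [t [Hs1 [Ht1 Hst]]]] : exists (s t : seq A), (forall a, a \in s -> Uz a) /\
   (forall b, b \in t -> P b) /\ \meet_(a <- s) a <= \join_(b <- t) b.
  apply: K; rewrite -HUz; apply: cl_trans zKO _.
  apply: cl_sup_least => w [a [b [ya [bW ->]]]]; apply: cl_sup_ub.
  by exists (ldiv a b) => //; exists a, b.
have [a [b [ya [bW tab]]]] : exists a b, cl_le y (e a) /\ cl_le (e b) W /\
    \join_(c <- t) c <= ldiv a b.
  elim: t Ht1 {Hst} => [|c t IH] Ht.
    exists \top, \bot; split; first exact: e_top.
    by split; [apply: e_bot|rewrite big_nil le0x].
  have [a [b [ya [bW tab]]]] : exists a b, cl_le y (e a) /\ cl_le (e b) W /\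
    \join_(c <- t) c <= ldiv a b.
    by apply: IH => w hw; apply: Ht; rewrite inE hw orbT.
  have : P c by apply: Ht; rewrite inE eqxx.
  move=> [a1 [b1 [ya1 [bW1 ->]]]].
  exists (a `&` a1), (b `|` b1); split; first exact: e_meet.
  split; first exact: e_join.
  rewrite big_cons leUx; apply/andP; split.
  - exact: (le_trans (ldiv_mono2 RA a1 (leUr _ _ : b1 <= b `|` b1)) (ldiv_anti1 RA _ (leIr _ _ : a `&` a1 <= a1))).
  - exact: (le_trans tab (le_trans (ldiv_mono2 RA a (leUl _ _ : b <= b `|` b1)) (ldiv_anti1 RA _ (leIl _ _ : a `&` a1 <= a)))).
have zab : cl_le z (e (ldiv a b)).
  apply: cl_trans (e_mono emb (le_trans Hst tab)).
  apply: (e_meet_list emb) => u hu; rewrite HUz; apply: inf_lb; exists u => //.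
  exact: Hs1.
have [s' [t' [Hs' [Ht' Hst']]]] := K (fun a => a = b) T
   (cl_trans (inf_lb (ex_intro2 _ _ b erefl erefl)) bW).
have bt : b <= \join_(c <- t') c.
  apply: le_trans Hst'; elim: s' Hs' => [|c s' IH] Hs'.
    by rewrite big_nil lex1.
  rewrite big_cons lexI; apply/andP; split.
    by rewrite (Hs' c); [apply: lexx|rewrite inE eqxx].
  by apply: IH => w hw; apply: Hs'; rewrite inE hw orbT.
have := ldiv_split RA Hdist a t'.
move=> /(le_trans (ldiv_mono2 RA a bt)) /(e_mono emb) /(cl_trans zab).
move=> /(jp_list CE Hz) [c].
rewrite inE => /orP [/eqP -> hz|/mapP [t0 t0in -> hz]].
  apply: (Hnzd y z Hy Hz); apply: cl_antisym; last exact: bot_le.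
  apply/(proj1 (Hadj y z (cl_bot C))).
  apply: cl_trans hz _; apply: L1 ya _; exact: e_bot.
have [o [Oo [nxo to]]] := Ht' t0 t0in.
apply: nxo; apply/(proj1 (Hadj y z o)).
apply: cl_trans hz _; exact: L1 ya to.
Qed.
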